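(* (Perfect soundness of the Meadows protocol.) Let a Meadows puzzle on an $n\times n$ grid be given. If the prover $P$ does not know a solution of the puzzle, then in the Meadows zero-knowledge protocol described in the context the verifier $V$ always rejects; equivalently, if $V$ accepts, then the squares printed during the protocol form a partition of the grid into squares each containing exactly one dotted cell.
   Context: Meadows puzzle: an $n\times n$ grid in which some cells $c_1,\dots,c_k$ contain a dot. A solution is a partition of the grid into squares (axis-aligned $s\times s$ blocks of cells) such that each square contains exactly one dotted cell. Cards: each card has either an integer or nothing (a blank card) on its front; all backs are indistinguishable. A pile-shifting shuffle applied to a matrix of face-down cards (entries may be equal-size stacks per row) cyclically shifts its columns by a uniformly random amount unknown to everyone. Chosen cut protocol: given face-down cards (or equal-size stacks) $c'_1,\dots,c'_q$ and a secret index $i$ chosen by $P$, $P$ forms a $3\times q$ matrix with row 1 equal to $c'_1,\dots,c'_q$, row 2 a face-down card $1$ in column $i$ and $0$ elsewhere, row 3 a card $1$ in column 1 and $0$ elsewhere (turned face-down); a pile-shifting shuffle is applied; row 2 is revealed and the card of row 1 above the $1$ is $c'_i$; after use it is put back, face-up cards are turned down, another pile-shifting shuffle is applied, row 3 is revealed and the columns are shifted cyclically so its $1$ returns to column 1. Printing protocol: given a face-down $p\times q$ template and a $p\times q$ area, each template card is placed on the corresponding area card; for each two-card stack, $P$ uses the chosen cut protocol to select a card, it is revealed, $V$ rejects unless it is blank, and it is removed. Meadows protocol: $P$ publicly puts a blank card on every cell, appends $n-1$ rows and $n-1$ columns of blank dummy cards below and to the right, and turns all cards face-down, giving a $(2n-1)\times(2n-1)$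 matrix (read row by row as a sequence). $P$ builds $n$ templates, one for each $s=1,\dots,n$: an $n\times n$ matrix whose top-left $s\times s$ block consists of cards $1$ and whose other cards are blank; $V$ checks them. For $i=1,\dots,k$: (1) via the chosen cut protocol $P$ selects the top-left card of an $n\times n$ area; (2) via the chosen cut protocol $P$ selects a template; (3) the printing protocol is applied; (4) all cards on dotted cells are revealed and $V$ rejects unless those on $c_1,\dots,c_i$ are $1$ and those on $c_{i+1},\dots,c_k$ are blank (they are then turned face-down again); (5) $P$ reconstructs a template, returns it to the pile, and $V$ checks that the pile consists of the $n$ correct templates (rejecting otherwise). Finally $P$ reveals all grid cards and $V$ rejects unless all are $1$; $P$ reveals all dummy cards and $V$ rejects unless all are blank. Otherwise $V$ accepts. *)

(* Defs.v *)
From mathcomp Require Import all_boot.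
Set Implicit Arguments. Unset Strict Implicit. Unset Printing Implicit Defensive.

(* A card front: [None] = blank card, [Some z] = card with integer z
   (only 1 is ever used in this protocol). *)
Definition card := option nat.
Definition blank : card := None.
Definition one : card := Some 1.

(* The (2n-1) x (2n-1) matrix of face-down cards, indexed by (row, column),
   0-based; positions outside the matrix are irrelevant. Rows/columns < n
   form the grid, the others are the dummy cards. *)
Definition cardmat := nat -> nat -> card.

Definition init_mat : cardmat := fun _ _ => blank.

Definition template (s : nat) (a b : nat) : card :=
  if (a < s) && (b < s) then one else blank.

(* The prover's choices in one iteration:
   - (mv_r, mv_c): top-left card of the n x n area (chosen cut, step 1);
   - mv_s.+1 : size of the chosen template (chosen cut, step 2);
   - mv_sel a b : in the printing protocol, for the two-card stack at
     offset (a,b) of the area, [true] = P selects (and reveals) the template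
     card, [false] = P selects (and reveals) the area card. *)
Record move (n : nat) := Move {
  mv_r : 'I_n; mv_c : 'I_n; mv_s : 'I_n; mv_sel : nat -> nat -> bool }.

(* Printing protocol: returns [None] if V rejects, otherwise the new matrix
   (the non-revealed card of every stack stays in the area). *)
Definition print (n : nat) (M : cardmat) (m : move n) : option cardmat :=
  let r := nat_of_ord (mv_r m) in
  let c := nat_of_ord (mv_c m) in
  let s := (nat_of_ord (mv_s m)).+1 in
  let revealed a b :=
    if mv_sel m a b then template s a b else M (r + a) (c + b) in
  let kept a b :=
    if mv_sel m a b then M (r + a) (c + b) else template s a b in
  if [forall a : 'I_n, forall b : 'I_n, revealed a b == blank] then
    Some (fun i j => if (r <= i < r + n) && (c <= j < c + n)
                     then kept (i - r) (j - c) else M i j)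
  else None.

(* Check (4) after iteration i (1-based): dots c_1..c_i carry card 1,
   dots c_{i+1}..c_k carry blank cards. *)
Definition dots_ok (dots : seq (nat * nat)) (i : nat) (M : cardmat) : bool :=
  [forall j : 'I_(size dots),
     M (nth (0,0) dots j).1 (nth (0,0) dots j).2
       == (if j < i then one else blank)].

Fixpoint run_from (n : nat) (dots : seq (nat * nat)) (i : nat) (M : cardmat)
    (ms : seq (move n)) : option cardmat :=
  match ms with
  | [::] => Some M
  | m :: ms' =>
      match print M m with
      | Some M' => if dots_ok dots i.+1 M' then run_from dots i.+1 M' ms'
                   else None
      | None => None
      end
  end.

Definition final_ok (n : nat) (M : cardmat) : bool :=
  [forall i : 'I_(n + n.-1), forall j : 'I_(n + n.-1),
     M i j == (if (i < n) && (j < n) then one else blank)].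

Arguments run_from : clear implicits.
Definition accepts (n : nat) (dots : seq (nat * nat)) (ms : seq (move n)) : bool :=
  (size ms == size dots) &&
  match run_from n dots 0 init_mat ms with
  | Some M => final_ok n M
  | None => false
  end.

(* A square: (top row, left column, side). *)
Definition square := (nat * nat * nat)%type.
Definition in_square (q : square) (x : nat * nat) : bool :=
  let: (r, c, s) := q in (r <= x.1 < r + s) && (c <= x.2 < c + s).

Definition printed_square n (m : move n) : square :=
  (nat_of_ord (mv_r m), nat_of_ord (mv_c m), (nat_of_ord (mv_s m)).+1).

Definition meadows_solution (n : nat) (dots : seq (nat * nat)) (sq : seq square) : Prop :=
  (forall q, q \in sq -> 0 < q.2 /\ q.1.1 + q.2 <= n /\ q.1.2 + q.2 <= n) /\
  (forall i j, i < n -> j < n -> count (fun q => in_square q (i, j)) sq = 1) /\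
  (forall q, q \in sq -> count (in_square q) dots = 1).

Arguments accepts : clear implicits.
Arguments meadows_solution : clear implicits.

(* Main.v *)
Require Import Defs.
From mathcomp Require Import all_boot zify.
Set Implicit Arguments. Unset Strict Implicit.

Lemma print_spec n M (m : move n) M' : print M m = Some M' ->
 forall i j, (in_square (printed_square m) (i,j) -> M i j = blank /\ M' i j = Defs.one) /\
   (~~ in_square (printed_square m) (i,j) -> M' i j = M i j).
Proof.
case: m => r c s sel; rewrite /print /=.
case: forallP => // H [<-] i j.
have sn := ltn_ord s; have rn := ltn_ord r; have cn := ltn_ord c.
case Hin: ((r <= i < r + s.+1) && (c <= j < c + s.+1)); split => // _.
- move/andP: Hin => [/andP [h1 h2] /andP [h3 h4]].
  have ha : i - r < n by lia.
  have hb : j - c < n by lia.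
  have := H (Ordinal ha) => /forallP /(_ (Ordinal hb)) /eqP /=.
  have -> : r + (i - r) = i by lia.
  have -> : c + (j - c) = j by lia.
  have Ht : template s.+1 (i - r) (j - c) = Defs.one by rewrite /template; apply/ifT; apply/andP; lia.
  rewrite Ht.
  have -> : (r <= i < r + n) && (c <= j < c + n) by apply/andP; lia.
  by case: (sel _ _) => //.
- case: ifP => // Ha.
  move/andP: Ha => [/andP [h1 h2] /andP [h3 h4]].
  have ha : i - r < n by lia.
  have hb : j - c < n by lia.
  have := H (Ordinal ha) => /forallP /(_ (Ordinal hb)) /eqP /=.
  have -> : r + (i - r) = i by lia.
  have -> : c + (j - c) = j by lia.
  have Ht : template s.+1 (i - r) (j - c) = blank.
    rewrite /template; apply/ifF; apply/negbTE/negP => /andP [? ?].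
    move: Hin => /negbT /negP; apply; apply/andP; lia.
  rewrite Ht.
  by case: (sel _ _) => // ->.
Qed.

Definition cnt (P : seq square) i j := count (fun q => in_square q (i,j)) P.
Definition Inv (P : seq square) (M : cardmat) :=
  forall i j, cnt P i j <= 1 /\ M i j = if cnt P i j == 0 then blank else Defs.one.

Lemma Inv_step P M n (m : move n) M' : Inv P M -> print M m = Some M' ->
  Inv (rcons P (printed_square m)) M'.
Proof.
move=> HI Hp i j; have [h1 h2] := print_spec Hp i j.
have [c1 c2] := HI i j.
rewrite /cnt -cats1 count_cat -/(cnt P i j).
have -> : count (fun q => in_square q (i,j)) [:: printed_square m] = in_square (printed_square m) (i,j) by rewrite /= addn0.
case Hin: (in_square (printed_square m) (i,j)).
- have [e1 e2] := h1 Hin. rewrite e2 addn1; rewrite e1 in c2.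
  case: (cnt P i j) c1 c2 => [|k] _ e; first by [].
  by case: k e.
- by rewrite addn0 h2 ?Hin.
Qed.

Lemma dots_step n dots i M (m : move n) M' : print M m = Some M' ->
  dots_ok dots i M -> dots_ok dots i.+1 M' -> i < size dots ->
  count (in_square (printed_square m)) dots = 1.
Proof.
move=> Hp /forallP H1 /forallP H2 hi.
rewrite -(mkseq_nth (0,0) dots) /mkseq count_map.
rewrite (@eq_in_count _ _ (pred1 i)); last first.
  move=> j; rewrite mem_iota add0n => /andP [_ hj].
  have := H1 (Ordinal hj); have := H2 (Ordinal hj) => /= /eqP e2 /eqP e1.
  change (in_square (printed_square m) (nth (0,0) dots j) = (j == i)).
  have [s1 s2] := print_spec Hp (nth (0,0) dots j).1 (nth (0,0) dots j).2.
  rewrite -surjective_pairing in s1 s2.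
  case Hin: (in_square _ _).
  - have [f1 f2] := s1 Hin; move: e1 e2; rewrite f1 f2.
    case: ifP => h1 //; case: ifP => h2 // _ _; apply/esym/eqP; lia.
  - move: e1 e2; rewrite s2 ?Hin // => ->.
    case: ifP => h1; case: ifP => h2 // _; apply/esym/eqP; lia.
by rewrite count_uniq_mem ?iota_uniq // mem_iota add0n hi.
Qed.

Lemma run_inv n dots (ms : seq (move n)) : forall i M P F,
  run_from n dots i M ms = Some F -> Inv P M -> dots_ok dots i M ->
  i + size ms = size dots ->
  Inv (P ++ map (@printed_square n) ms) F /\
  (forall q, q \in map (@printed_square n) ms -> count (in_square q) dots = 1).
Proof.
elim: ms => [|m ms IH] i M P F /=.
  by move=> [<-] HI _ _; rewrite cats0.
case Hp: (print M m) => [M'|] //.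
case Hd: (dots_ok dots i.+1 M') => // Hr HI Hd0 Hs.
have [I1 I2] := IH _ _ _ _ Hr (Inv_step HI Hp) Hd ltac:(by rewrite -Hs addSnnS).
split; first by rewrite -cat_rcons.
move=> q; rewrite in_cons => /orP [/eqP -> | /I2 //].
apply: (dots_step Hp Hd0 Hd); lia.
Qed.

Lemma map_ex n (ms : seq (move n)) q : q \in map (@printed_square n) ms -> exists m : move n, q = printed_square m.
Proof.
elim: ms => //= m ms IH; rewrite in_cons => /orP [/eqP -> | /IH //]; by exists m.
Qed.

Theorem lemma5 (n : nat) (dots : seq (nat * nat)) (ms : seq (move n)) :
  uniq dots ->
  all (fun d => (d.1 < n) && (d.2 < n)) dots ->
  accepts n dots ms ->
  meadows_solution n dots (map (@printed_square n) ms).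
Proof.
move=> _ _ /andP [/eqP Hs].
case Hr: (run_from n dots 0 init_mat ms) => [F|] // Hf.
have HI0 : Inv [::] init_mat by move=> i j.
have Hd0 : dots_ok dots 0 init_mat by apply/forallP.
have [HI Hc] := run_inv Hr HI0 Hd0 ltac:(by rewrite add0n).
rewrite cat0s in HI.
move/forallP: Hf => Hf.
have Fone : forall i j, i < n + n.-1 -> j < n + n.-1 -> F i j = Defs.one -> (i < n) && (j < n).
  move=> i j hi hj e; have := Hf (Ordinal hi) => /forallP /(_ (Ordinal hj)) /eqP /=.
  by rewrite e; case: ifP.
have Fcov : forall i j, i < n -> j < n -> F i j = Defs.one.
  move=> i j hi hj; have hi' : i < n + n.-1 by lia.
  have hj' : j < n + n.-1 by lia.
  have := Hf (Ordinal hi') => /forallP /(_ (Ordinal hj')) /eqP /=.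
  by rewrite hi hj.
have Incnt : forall i j q, q \in map (@printed_square n) ms -> in_square q (i,j) -> F i j = Defs.one.
  move=> i j q hq hin; have [_ ->] := HI i j.
  suff : 0 < cnt (map (@printed_square n) ms) i j by case: (cnt _ _ _).
  by rewrite /cnt -has_count; apply/hasP; exists q.
split; [|split].
- move=> q hq; have [m Eq] := map_ex hq.
  split; first by rewrite Eq.
  have rn := ltn_ord (mv_r m); have cn := ltn_ord (mv_c m); have sn := ltn_ord (mv_s m).
  rewrite Eq /=.
  have A := Fone _ _ _ _ (Incnt (mv_r m + mv_s m) (mv_c m) q hq _).
  have B := Fone _ _ _ _ (Incnt (mv_r m) (mv_c m + mv_s m) q hq _).
  rewrite Eq /= in A B.
  have hA : (mv_r m + mv_s m < n) && (mv_c m < n).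
    apply: A; [lia | lia | apply/andP; split; apply/andP; lia].
  have hB : (mv_r m < n) && (mv_c m + mv_s m < n).
    apply: B; [lia | lia | apply/andP; split; apply/andP; lia].
  lia.
- move=> i j hi hj; have [h1 h2] := HI i j.
  move: h2; rewrite Fcov // -/(cnt _ i j).
  by case: (cnt _ i j) h1 => [|[|k]].
- exact: Hc.
Qed.
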